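(* For all positive integers $t,n_s,n_b,K,|\Pi|$, all $\epsilon\in(0,1]$, $\delta\in(0,1)$, $\alpha>0$ and $\Delta\ge 0$, $$\min_{\lambda\in\{0,1\}}G_t(\lambda,\alpha,\Delta)\ \le\ \sqrt{2}\,\min_{\lambda\in[0,1]}G_t(\lambda,\alpha,\Delta).$$
   Context: Here $K$ is the number of actions, $|\Pi|$ the size of a finite policy class, $n_s$ the number of warm-start examples, $n_b$ the number of interaction rounds, $\epsilon$ an exploration parameter and $\delta$ a confidence parameter. Writing $L=\ln\frac{8n_b|\Pi|}{\delta}$, define for $\lambda\in[0,1]$ $$V_t(\lambda)=2\sqrt{\Big(\lambda^2\frac{Kt}{\epsilon}+(1-\lambda)^2n_s\Big)L}+\Big(\frac{\lambda K}{\epsilon}+(1-\lambda)\Big)L,$$ $$G_t(\lambda,\alpha,\Delta)=\frac{(1-\lambda)n_s\Delta+2V_t(\lambda)}{\lambda t+(1-\lambda)n_s\alpha}.$$ *)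

(* Defs.v *)
From Stdlib Require Import Reals.
Open Scope R_scope.

Definition Lconst (nb Pi : nat) (delta : R) : R :=
  ln (8 * INR nb * INR Pi / delta).

Definition Vt (t ns nb K Pi : nat) (eps delta lam : R) : R :=
  2 * sqrt ((lam ^ 2 * (INR K * INR t / eps) + (1 - lam) ^ 2 * INR ns)
            * Lconst nb Pi delta)
  + (lam * INR K / eps + (1 - lam)) * Lconst nb Pi delta.

Definition Gt (t ns nb K Pi : nat) (eps delta lam alpha Delta : R) : R :=
  ((1 - lam) * INR ns * Delta + 2 * Vt t ns nb K Pi eps delta lam)
  / (lam * INR t + (1 - lam) * INR ns * alpha).

(* Main.v *)
Require Import Defs.
From Stdlib Require Import Reals Lra Lia.
Open Scope R_scope.

Lemma aux_min (N0 N1 D0 D1 N D r lam : R) :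
  0 < D0 -> 0 < D1 -> 0 <= lam <= 1 -> D = (1 - lam) * D0 + lam * D1 ->
  (1 - lam) * N0 + lam * N1 <= r * N ->
  Rmin (N0 / D0) (N1 / D1) <= r * (N / D).
Proof.
  intros H0 H1 Hl HD HN.
  set (m := Rmin (N0 / D0) (N1 / D1)).
  assert (m0 : m * D0 <= N0).
  { assert (m <= N0 / D0) by apply Rmin_l.
    apply Rmult_le_compat_r with (r := D0) in H; [|lra].
    replace (N0 / D0 * D0) with N0 in H by (field; lra). exact H. }
  assert (m1 : m * D1 <= N1).
  { assert (m <= N1 / D1) by apply Rmin_r.
    apply Rmult_le_compat_r with (r := D1) in H; [|lra].
    replace (N1 / D1 * D1) with N1 in H by (field; lra). exact H. }
  assert (HDp : 0 < D) by nra.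
  apply Rmult_le_reg_r with D; [exact HDp|].
  replace (r * (N / D) * D) with (r * N) by (field; lra).
  rewrite HD. nra.
Qed.

Theorem mainTheorem3 :
  forall (t ns nb K Pi : nat) (eps delta alpha Delta : R),
    (0 < t)%nat -> (0 < ns)%nat -> (0 < nb)%nat -> (0 < K)%nat -> (0 < Pi)%nat ->
    0 < eps <= 1 -> 0 < delta < 1 -> 0 < alpha -> 0 <= Delta ->
    forall lam : R, 0 <= lam <= 1 ->
      Rmin (Gt t ns nb K Pi eps delta 0 alpha Delta)
           (Gt t ns nb K Pi eps delta 1 alpha Delta)
      <= sqrt 2 * Gt t ns nb K Pi eps delta lam alpha Delta.
Proof.
  intros t ns nb K Pi eps delta alpha Delta Ht Hns Hnb HK HPi He Hd Ha HD lam Hl.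
  pose proof Hnb as Hnbn. pose proof HPi as HPin.
  apply lt_0_INR in Ht, Hns, Hnb, HK, HPi.
  unfold Gt, Vt.
  set (L := Lconst nb Pi delta).
  assert (HL : 0 < L).
  { unfold L, Lconst. rewrite <- ln_1. apply ln_increasing; [lra|].
    assert (Hi : delta * / delta = 1) by (apply Rinv_r; lra).
    assert (Hi0 : 0 < / delta) by (apply Rinv_0_lt_compat; lra).
    assert (1 <= INR nb) by (apply (le_INR 1); lia).
    assert (1 <= INR Pi) by (apply (le_INR 1); lia).
    assert (1 <= INR nb * INR Pi) by nra.
    unfold Rdiv. nra. }
  set (A := INR K * INR t / eps).
  assert (HA : 0 < A) by (unfold A; unfold Rdiv; apply Rmult_lt_0_compat;
     [nra | apply Rinv_0_lt_compat; lra]).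
  set (c := INR K / eps).
  assert (Hc : 0 < c) by (unfold c; unfold Rdiv; apply Rmult_lt_0_compat;
     [nra | apply Rinv_0_lt_compat; lra]).
  replace (0 ^ 2 * A + (1 - 0) ^ 2 * INR ns) with (INR ns) by ring.
  replace (1 ^ 2 * A + (1 - 1) ^ 2 * INR ns) with A by ring.
  fold c.
  set (sB := sqrt (INR ns * L)).
  set (sA := sqrt (A * L)).
  set (X := (lam ^ 2 * A + (1 - lam) ^ 2 * INR ns) * L).
  set (s := sqrt X).
  assert (HX : 0 <= X).
  { unfold X. apply Rmult_le_pos; [|lra].
    assert (0 <= lam ^ 2) by apply pow2_ge_0.
    assert (0 <= (1 - lam) ^ 2) by apply pow2_ge_0.
    assert (0 <= lam ^ 2 * A) by (apply Rmult_le_pos; lra).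
    assert (0 <= (1 - lam) ^ 2 * INR ns) by (apply Rmult_le_pos; lra).
    lra. }
  assert (HsA : 0 <= sA) by apply sqrt_pos.
  assert (HsB : 0 <= sB) by apply sqrt_pos.
  assert (HsA2 : sA * sA = A * L) by (apply sqrt_sqrt; nra).
  assert (HsB2 : sB * sB = INR ns * L) by (apply sqrt_sqrt; nra).
  assert (Hkey : lam * sA + (1 - lam) * sB <= sqrt 2 * s).
  { unfold s. rewrite <- sqrt_mult_alt by lra.
    rewrite <- (sqrt_pow2 (lam * sA + (1 - lam) * sB)) by nra.
    apply sqrt_le_1_alt.
    assert (0 <= (lam * sA - (1 - lam) * sB) ^ 2) by apply pow2_ge_0.
    unfold X. nra. }
  assert (Hs2 : 1 <= sqrt 2).
  { rewrite <- sqrt_1. apply sqrt_le_1_alt. lra. }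
  assert (Hs : 0 <= s) by apply sqrt_pos.
  apply aux_min with (D0 := 0 * INR t + (1 - 0) * INR ns * alpha)
                     (D1 := 1 * INR t + (1 - 1) * INR ns * alpha) (lam := lam).
  - nra.
  - nra.
  - exact Hl.
  - ring.
  - assert (0 <= (sqrt 2 - 1) * ((1 - lam) * INR ns * Delta)) by
      (apply Rmult_le_pos; [lra| apply Rmult_le_pos; [apply Rmult_le_pos|]; lra]).
    assert (0 <= (sqrt 2 - 1) * s) by (apply Rmult_le_pos; lra).
    assert (0 <= (sqrt 2 - 1) * ((lam * c + (1 - lam)) * L)) by
      (apply Rmult_le_pos; [lra| apply Rmult_le_pos; nra]).
    replace (0 * INR K / eps) with 0 by (field; lra).
    replace (1 * INR K / eps) with c by (unfold c; field; lra).
    replace (lam * INR K / eps) with (lam * c) by (unfold c; field; lra).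
    nra.
Qed.
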